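(* Let $\mathcal{G}=\langle\mathbb{V},\mathbb{E}\rangle$ and the bijection $e$ be as in the context, let $u\in\mathbb{V}$, and let $\pi$ be an $\mathcal{H}^{(\ast)}$-partition of $\mathcal{P}(\mathcal{G},e)$ in which the gadget $\mathcal{N}_u$ is not well-oriented. Then there exists an $\mathcal{H}^{(\ast)}$-partition $\pi'$ of $\mathcal{P}(\mathcal{G},e)$ such that $|\pi'|\le|\pi|$, $\mathcal{N}_u$ is well-oriented in $\pi'$, and for every $w\in\mathbb{V}$ with $w\ne u$, $\mathcal{N}_w$ is well-oriented in $\pi$ if and only if $\mathcal{N}_w$ is well-oriented in $\pi'$.
   Context: Standing assumption: $\mathcal{G}=\langle\mathbb{V},\mathbb{E}\rangle$ is a finite directed graph with $\mathbb{V}\ne\emptyset$, without self-loops, in which every vertex has in-degree $1$ or out-degree $1$; let $m=|\mathbb{E}|$ and let $e:\mathbb{E}\to\{1,\dots,m\}$ be a bijection. For $v\in\mathbb{V}$ the gadget $\mathcal{N}_v=\langle\mathcal{V}_v,\mathcal{E}_v\rangle$ has vertices $\mathcal{V}_v=\{v_{i,j}:0\le i,j\le m\}$ (distinct for distinct $v$) and arcs $\mathcal{E}_v=\{\langle v_{i,j},v_{i,j+1}\rangle:0\le i\le m,0\le j<m\}\cup\{\langle v_{i,j},v_{i+1,j}\rangle:0\le i<m,0\le j\le m\}$. Let $\mathcal{L}_v=\{\{v_{i,0},\dots,v_{i,m}\}:0\le i\le m\}$ and $\mathcal{R}_v=\{\{v_{0,i},\dots,v_{m,i}\}:0\le i\le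 m\}$. The digraph $\mathcal{P}(\mathcal{G},e)$ has vertex set $\bigcup_{v\in\mathbb{V}}\mathcal{V}_v\cup\mathbb{E}$ (each arc of $\mathcal{G}$ is also a vertex) and arc set $\bigcup_{v\in\mathbb{V}}\mathcal{E}_v\cup\{\langle\langle v,u\rangle,v_{e(\langle v,u\rangle),0}\rangle:\langle v,u\rangle\in\mathbb{E}\}\cup\{\langle\langle v,u\rangle,u_{0,e(\langle v,u\rangle)}\rangle:\langle v,u\rangle\in\mathbb{E}\}$; it is a DAG. For a DAG $G$, a partition $\pi$ of its vertex set is an $\mathcal{H}^{(\ast)}$-partition if every induced subgraph $G[P]$, $P\in\pi$, has a directed Hamiltonian path and the quotient digraph $G/\pi$ (vertex set $\pi$, arc $\langle P,Q\rangle$ for $P\ne Q$ whenever some arc of $G$ goes from $P$ to $Q$) is acyclic. For an $\mathcal{H}^{(\ast)}$-partition $\pi$ of $\mathcal{P}(\mathcal{G},e)$ and $v\in\mathbb{V}$, let $\pi|_{\mathcal{N}_v}=\{P\cap\mathcal{V}_v:P\in\pi,\ P\cap\mathcal{V}_v\ne\emptyset\}$; the gadget $\mathcal{N}_v$ is well-oriented in $\pi$ if $\pi|_{\mathcal{N}_v}=\mathcal{L}_v$ or $\pi|_{\mathcal{N}_v}=\mathcal{R}_v$. *)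

(* Defs.v *)
From mathcomp Require Import all_boot.
Set Implicit Arguments. Unset Strict Implicit. Unset Printing Implicit Defensive.

Section PGraph.
Variables (V : finType) (E : rel V).

(* arcs of G, as a finite type (each arc is also a vertex of P(G,e)) *)
Definition edgeT := {p : V * V | E p.1 p.2}.

Definition nedges : nat := #|{: edgeT}|.

(* vertices of P(G,e): gadget vertices v_{i,j} (0 <= i,j <= m) and arcs of G *)
Definition PV := ((V * 'I_(nedges.+1) * 'I_(nedges.+1)) + edgeT)%type.

Definition gv (v : V) (i j : 'I_(nedges.+1)) : PV := inl (v, i, j).

(* arc relation of P(G,e), given the labelling e : E -> {1..m} *)
Definition parc (e : edgeT -> nat) : rel PV := fun x y =>
  match x, y with
  | inl (v, i, j), inl (v', i', j') =>
      (v' == v) &&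
      (((nat_of_ord i' == i) && (nat_of_ord j' == j.+1)) ||
       ((nat_of_ord i' == i.+1) && (nat_of_ord j' == j)))
  | inr a, inl (v, i, j) =>
      [&& v == (val a).1, nat_of_ord i == e a & nat_of_ord j == 0] ||
      [&& v == (val a).2, nat_of_ord i == 0 & nat_of_ord j == e a]
  | _, _ => false
  end.

Definition gadget (v : V) : {set PV} :=
  [set x | if x is inl (w, _, _) then w == v else false].

Definition Lset (v : V) : {set {set PV}} :=
  [set [set gv v i j | j : 'I_(nedges.+1)] | i : 'I_(nedges.+1)].
Definition Rset (v : V) : {set {set PV}} :=
  [set [set gv v j i | j : 'I_(nedges.+1)] | i : 'I_(nedges.+1)].

End PGraph.

Section Hstar.
Variables (T : finType) (r : rel T).

Definition ham_path (P : {set T}) : Prop :=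
  exists s : seq T, [/\ uniq s, (forall x, (x \in s) = (x \in P)) & sorted r s].

Definition qarc (pi : {set {set T}}) : rel {set T} := fun P Q =>
  [&& P \in pi, Q \in pi, P != Q & [exists x in P, exists y in Q, r x y]].

Definition acyclic (s : rel {set T}) : Prop :=
  forall c : seq {set T}, c != [::] -> ~~ cycle s c.

Definition Hstar_partition (pi : {set {set T}}) : Prop :=
  [/\ partition pi [set: T],
      forall P, P \in pi -> ham_path P
    & acyclic (qarc pi)].

Definition restr (pi : {set {set T}}) (A : {set T}) : {set {set T}} :=
  [set P :&: A | P in pi & P :&: A != set0].

End Hstar.

Definition well_oriented (V : finType) (E : rel V) (pi : {set {set PV E}}) (v : V) : bool :=
  (restr pi (gadget E v) == Lset E v) || (restr pi (gadget E v) == Rset E v).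

(* Main.v *)
Require Import Defs.
From mathcomp Require Import all_boot.
Set Implicit Arguments. Unset Strict Implicit. Unset Printing Implicit Defensive.

Section Generic.
Variable T : finType.

Lemma blk_partition (f : T -> {set T}) :
  (forall x, x \in f x) -> (forall x y, y \in f x -> f y = f x) ->
  partition [set f x | x : T] [set: T].
Proof.
move=> fx fxy; apply/and3P; split.
- apply/eqP/setP=> y; rewrite in_setT; apply/bigcupP; exists (f y) => //.
  by apply/imsetP; exists y.
- apply/trivIsetP=> A B /imsetP[x _ ->] /imsetP[z _ ->] neq.
  apply/pred0P=> y /=; apply/negbTE/negP=> /andP[/fxy h1 /fxy h2].
  by move: neq; rewrite -h1 -h2 eqxx.
- apply/imsetP=> -[x _ h]; by move: (fx x); rewrite -h inE.
Qed.

Lemma blk_mem (f : T -> {set T}) B x :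
  (forall x y, y \in f x -> f y = f x) ->
  B \in [set f x | x : T] -> x \in B -> B = f x.
Proof. by move=> fxy /imsetP[z _ ->] /fxy ->. Qed.

Lemma restr_pblock (pi : {set {set T}}) A :
  partition pi [set: T] -> restr pi A = [set pblock pi y :&: A | y in A].
Proof.
move=> hp; apply/setP=> S; apply/imsetP/imsetP.
- case=> P; rewrite inE => /andP[Pin /set0Pn[y]] yPA ->.
  move: (yPA); rewrite inE => /andP[yP yA].
  by exists y => //; rewrite (def_pblock (partition_trivIset hp) Pin yP).
- case=> y yA ->; exists (pblock pi y) => //.
  rewrite inE pblock_mem ?(cover_partition hp) ?in_setT //=.
  apply/set0Pn; exists y; rewrite inE yA andbT mem_pblock.
  by rewrite (cover_partition hp) in_setT.
Qed.

Variable r : rel T.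
Variable pi : {set {set T}}.
Hypothesis acyc : acyclic (qarc r pi).

Lemma acyc_back P Q : qarc r pi P Q -> connect (qarc r pi) Q P -> False.
Proof.
move=> hPQ /connectP[p pth lst].
have := acyc (c := Q :: p) isT; rewrite /cycle rcons_path pth /= -lst.
by rewrite hPQ.
Qed.

Lemma acyc_antisym P Q : connect (qarc r pi) P Q -> connect (qarc r pi) Q P -> P = Q.
Proof.
move=> hPQ hQP; case: (eqVneq P Q) => // neq.
case/connectP: hPQ => -[|P1 p] /= pth lst; first by rewrite lst eqxx in neq.
case/andP: pth => h1 pth.
apply: False_ind; apply: (acyc_back h1); apply: connect_trans hQP.
by rewrite lst; apply/connectP; exists p.
Qed.

Definition anc P := [set Q | (Q != P) && connect (qarc r pi) Q P].
Definition h0 P := #|anc P|.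

Lemma h0_lt P Q : qarc r pi P Q -> h0 P < h0 Q.
Proof.
move=> hPQ; apply: proper_card; apply/properP; split.
- apply/subsetP=> Q0; rewrite !inE => /andP[n0 c0].
  have cQ : connect (qarc r pi) Q0 Q by apply: connect_trans c0 (connect1 hPQ).
  rewrite cQ andbT; apply/negP=> /eqP e0; subst Q0.
  exact: (acyc_back hPQ c0).
- exists P; rewrite !inE ?eqxx //= connect1 // andbT.
  by move: hPQ => /and4P[_ _ -> _].
Qed.

End Generic.

Lemma path_rank (U : Type) (e : rel U) (rk : U -> nat) :
  (forall x y, e x y -> rk x < rk y) ->
  forall s x, path e x s -> rk x + size s <= rk (last x s).
Proof.
move=> hr; elim=> [|y s IH] x /=; first by rewrite addn0.
case/andP=> hxy /IH h; apply: leq_trans h.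
by rewrite addnS -addSn leq_add2r hr.
Qed.

Lemma no_cycle_rank (U : eqType) (e : rel U) (rk : U -> nat) :
  (forall x y, e x y -> rk x < rk y) ->
  forall c, c != [::] -> ~~ cycle e c.
Proof.
move=> hr [|x s] // _; rewrite /cycle; apply/negP=> hp.
have := path_rank hr hp; rewrite last_rcons size_rcons addnS.
by rewrite ltnNge leq_addr.
Qed.

Require Import Defs.
From mathcomp Require Import all_boot.
From mathcomp Require Import zify.
Set Implicit Arguments. Unset Strict Implicit. Unset Printing Implicit Defensive.

Section Main.
Variables (V : finType) (E : rel V) (e : edgeT E -> nat).
Hypothesis Hloop : forall v, ~~ E v v.
Hypothesis He_inj : injective e.
Hypothesis He_range : forall a, 1 <= e a <= nedges E.
Variable u : V.

Local Notation m := (nedges E).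
Local Notation T := (PV E).
Local Notation r := (parc e).

Definition Lc (o : bool) (x : T) : nat :=
  if x is inl (_, i, j) then (if o then nat_of_ord i else nat_of_ord j) else 0.
Definition Pc o x := Lc (~~ o) x.
Definition gvo (o : bool) (v : V) (L P : 'I_m.+1) : T :=
  if o then gv v L P else gv v P L.
Definition vx o v (L P : nat) : T := gvo o v (inord L) (inord P).

Lemma Lc_le o x : Lc o x <= m.
Proof. by case: x => [[[v i j]]|a] //=; case: o; rewrite -ltnS. Qed.
Lemma Pc_le o x : Pc o x <= m.
Proof. exact: Lc_le. Qed.

Lemma vxK o v x : x \in gadget E v -> vx o v (Lc o x) (Pc o x) = x.
Proof.
case: x => [[[w i] j]|a]; rewrite inE //= => /eqP->.
by case: o; rewrite /vx /gvo /= !inord_val.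
Qed.

Lemma vx_gadget o v L P : vx o v L P \in gadget E v.
Proof. by rewrite /vx /gvo; case: o; rewrite /= inE /=. Qed.

Lemma Lc_vx o v L P : L <= m -> Lc o (vx o v L P) = L.
Proof. by move=> h; rewrite /vx /gvo; case: o => /=; rewrite inordK. Qed.
Lemma Pc_vx o v L P : P <= m -> Pc o (vx o v L P) = P.
Proof. by move=> h; rewrite /vx /gvo /Pc; case: o => /=; rewrite inordK. Qed.

Lemma vx_inj o v L P L' P' : L <= m -> P <= m -> L' <= m -> P' <= m ->
  vx o v L P = vx o v L' P' -> L = L' /\ P = P'.
Proof.
move=> h1 h2 h3 h4 eq.
have := congr1 (Lc o) eq; have := congr1 (Pc o) eq.
by rewrite !Lc_vx // !Pc_vx.
Qed.

Lemma parc_gadget o v (x y : T) : x \in gadget E v ->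
  r x y = (y \in gadget E v) &&
    (((Lc o y == Lc o x) && (Pc o y == (Lc (~~o) x).+1)) ||
     ((Lc o y == (Lc o x).+1) && (Pc o y == Lc (~~o) x))).
Proof.
case: x => [[[w i] j]|a]; rewrite inE //= => /eqP->.
case: y => [[[w' i'] j']|b]; rewrite ?inE //=.
case: o => //=.
by rewrite orbC; congr (_ && (_ || _)); rewrite andbC.
Qed.

Lemma parc_to_inr x a : r x (inr a) = false.
Proof. by case: x => [[[w i] j]|b]. Qed.

Lemma parc_inr_inr a b : r (inr a) (inr b) = false.
Proof. by []. Qed.

Definition good o (a : edgeT E) := if o then (val a).1 == u else (val a).2 == u.
Definition bad o a := good (~~ o) a.

Lemma good_bad o a : good o a -> bad o a -> False.
Proof.
rewrite /bad /good; case: o => /= /eqP h1 /eqP h2;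
have := valP a; rewrite ?h1 ?h2 => h; by move: (Hloop u); rewrite h.
Qed.

Lemma parc_arc_G o a y : y \in gadget E u ->
  r (inr a) y = (good o a && (Lc o y == e a) && (Pc o y == 0)) ||
                (bad o a && (Lc o y == 0) && (Pc o y == e a)).
Proof.
case: y => [[[w i] j]|b]; rewrite inE //= => /eqP->.
rewrite /bad /good /Pc ![u == _]eq_sym; case: o => /=;
by case: (_ == u); case: (_ == u); case: (_ == e a); case: (_ == e a);
   case: (_ == 0); case: (_ == 0).
Qed.


Definition gle (x y : T) : bool :=
  match x, y with
  | inl (v, i, j), inl (v', i', j') => [&& v == v', i <= i' & j <= j']
  | inr a, inr b => a == b
  | inr _, inl _ => true
  | inl _, inr _ => false
  end.

Lemma gle_refl : reflexive gle.
Proof. by case=> [[[w i] j]|a] /=; rewrite eqxx ?leqnn. Qed.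

Lemma gle_trans : transitive gle.
Proof.
case=> [[[w i] j]|a] [[[w1 i1] j1]|a1] [[[w2 i2] j2]|a2] //=.
- case/and3P=> /eqP-> h1 h2 /and3P[/eqP-> h3 h4].
  by rewrite eqxx (leq_trans h1 h3) (leq_trans h2 h4).
- by move=> /eqP-> /eqP->.
Qed.

Lemma parc_gle x y : r x y -> gle x y.
Proof.
case: x => [[[w i] j]|a]; case: y => [[[w1 i1] j1]|a1] //=.
case/andP=> /eqP-> /orP[] /andP[/eqP-> /eqP->]; by rewrite eqxx /= leqnn leqnSn.
Qed.

Lemma gle_gadget o v x y : x \in gadget E v -> y \in gadget E v ->
  gle x y = (Lc o x <= Lc o y) && (Pc o x <= Pc o y).
Proof.
case: x => [[[w i] j]|a]; rewrite inE //= => /eqP->.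
case: y => [[[w' i'] j']|b]; rewrite inE //= => /eqP->.
by rewrite eqxx /Pc; case: o => //=; rewrite andbC.
Qed.

Definition isl (x : T) : bool := if x is inl _ then true else false.

Lemma gle_same_gadget v x y : x \in gadget E v -> isl y -> gle x y || gle y x ->
  y \in gadget E v.
Proof.
case: x => [[[w i] j]|a]; rewrite inE //= => /eqP->.
case: y => [[[w' i'] j']|b] //= _; rewrite inE /=.
by case/orP=> /and3P[/eqP-> _ _].
Qed.


Lemma path_isl x s : path r x s -> all isl s.
Proof.
elim: s x => [|y s IH] x //= /andP[h /IH ->]; rewrite andbT.
by case: y h => // b; rewrite parc_to_inr.
Qed.

Lemma parc_gadget_in v x y : x \in gadget E v -> r x y -> y \in gadget E v.
Proof. by move=> hx; rewrite (parc_gadget true _ hx) => /andP[]. Qed.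


Variable pi : {set {set T}}.
Hypothesis Hpi : Hstar_partition r pi.

Lemma Hpart : partition pi [set: T]. Proof. by case: Hpi. Qed.
Lemma Hham P : P \in pi -> ham_path r P. Proof. by case: Hpi => _ h _; apply: h. Qed.
Lemma Hacyc : acyclic (qarc r pi). Proof. by case: Hpi. Qed.
Lemma Htriv : trivIset pi. Proof. exact: partition_trivIset Hpart. Qed.

Local Notation pb := (pblock pi).

Lemma mem_pb x : x \in pb x.
Proof. by rewrite mem_pblock (cover_partition Hpart) in_setT. Qed.
Lemma pb_in x : pb x \in pi.
Proof. by apply: pblock_mem; rewrite (cover_partition Hpart) in_setT. Qed.
Lemma pb_eq P x : P \in pi -> x \in P -> pb x = P.
Proof. exact: def_pblock Htriv. Qed.
Lemma pb_same x y : y \in pb x -> pb y = pb x.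
Proof. exact: same_pblock Htriv. Qed.

Lemma chain P x y : P \in pi -> x \in P -> y \in P -> gle x y || gle y x.
Proof.
move=> /Hham [s [us ms ss]]; rewrite -!ms => xs ys.
have sg : sorted gle s := sub_sorted parc_gle ss.
have H := sorted_leq_nth gle_trans gle_refl x sg.
have xi : index x s \in [pred n | n < size s] by rewrite inE index_mem.
have yi : index y s \in [pred n | n < size s] by rewrite inE index_mem.
case: (leqP (index x s) (index y s)) => h.
  by have := H _ _ xi yi h; rewrite !nth_index // => ->.
by have := H _ _ yi xi (ltnW h); rewrite !nth_index // => ->; rewrite orbT.
Qed.

Lemma arc_step P a y : P \in pi -> inr a \in P -> y \in P -> y != inr a ->
  exists2 z, z \in P & r (inr a) z.
Proof.
move=> /Hham [s [us ms ss]]; rewrite -!ms.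
case: s us ms ss => [|x0 s] //= us ms ss.
have al := path_isl ss.
rewrite !inE => /orP[/eqP ax|ain]; last by move/allP: al => /(_ _ ain).
subst x0 => /orP[/eqP->|yin]; first by rewrite eqxx.
case: s us ms ss al yin => [|z s] //= us ms ss al yin _.
exists z; first by rewrite -ms !inE eqxx orbT.
by case/andP: ss.
Qed.


Lemma step_connect x y : r x y -> connect (qarc r pi) (pb x) (pb y).
Proof.
move=> hxy; case: (eqVneq (pb x) (pb y)) => [->|neq]; first exact: connect0.
apply: connect1; rewrite /qarc !pb_in neq /=.
by apply/existsP; exists x; rewrite mem_pb; apply/existsP; exists y; rewrite mem_pb.
Qed.

Lemma r_vx_P o v L Q : L <= m -> Q < m -> r (vx o v L Q) (vx o v L Q.+1).
Proof.
move=> hL hQ; rewrite (parc_gadget o _ (vx_gadget o v L Q)) vx_gadget /=.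
have h1 := Pc_vx o v L (ltnW hQ).
rewrite /Pc in h1; rewrite Pc_vx // h1 !Lc_vx // !eqxx //.
Qed.

Lemma r_vx_L o v L Q : L < m -> Q <= m -> r (vx o v L Q) (vx o v L.+1 Q).
Proof.
move=> hL hQ; rewrite (parc_gadget o _ (vx_gadget o v L Q)) vx_gadget /=.
have h1 := Pc_vx o v L hQ.
rewrite /Pc in h1; rewrite Pc_vx // h1 !Lc_vx //; last exact: ltnW.
by rewrite !eqxx orbT.
Qed.

Lemma walk o v L P L' P' : L <= L' -> P <= P' -> L' <= m -> P' <= m ->
  connect (qarc r pi) (pb (vx o v L P)) (pb (vx o v L' P')).
Proof.
move=> h1 h2 h3 h4.
have wP : forall k, P + k <= m -> connect (qarc r pi) (pb (vx o v L P)) (pb (vx o v L (P + k))).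
  elim=> [|k IH] hk; first by rewrite addn0 connect0.
  have hk' : P + k <= m by lia.
  apply: connect_trans (IH hk') _.
  rewrite addnS; apply: step_connect; apply: r_vx_P; lia.
have wL : forall k, L + k <= m -> connect (qarc r pi) (pb (vx o v L P')) (pb (vx o v (L + k) P')).
  elim=> [|k IH] hk; first by rewrite addn0 connect0.
  have hk' : L + k <= m by lia.
  apply: connect_trans (IH hk') _.
  rewrite addnS; apply: step_connect; apply: r_vx_L; lia.
apply: connect_trans (wP (P' - P) _) _; first by lia.
rewrite subnKC //; have := wL (L' - L); rewrite subnKC //; apply; lia.
Qed.

Lemma gle_connect v x y : x \in gadget E v -> y \in gadget E v -> gle x y ->
  connect (qarc r pi) (pb x) (pb y).
Proof.
move=> hx hy; rewrite (gle_gadget true hx hy) => /andP[h1 h2].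
rewrite -(vxK true hx) -(vxK true hy); apply: walk => //; exact: Lc_le.
Qed.

Lemma conv v x y z : x \in gadget E v -> y \in gadget E v -> z \in gadget E v ->
  gle x y -> gle y z -> pb z = pb x -> pb y = pb x.
Proof.
move=> hx hy hz h1 h2 e1; apply: (acyc_antisym Hacyc).
  by rewrite -e1; exact: gle_connect hy hz h2.
exact: gle_connect hx hy h1.
Qed.

Lemma conv_mem v x y z : x \in gadget E v -> y \in gadget E v -> z \in gadget E v ->
  gle x y -> gle y z -> z \in pb x -> y \in pb x.
Proof.
move=> hx hy hz h1 h2 /pb_same e1; rewrite -(conv hx hy hz h1 h2 e1); exact: mem_pb.
Qed.

Lemma incomp x y : ~~ gle x y -> ~~ gle y x -> y \notin pb x.
Proof.
move=> h1 h2; apply/negP=> hy.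
by have := chain (pb_in x) (mem_pb x) hy; rewrite (negbTE h1) (negbTE h2).
Qed.

Lemma antidiag o v x y : x \in gadget E v -> y \in gadget E v -> y \in pb x ->
  Lc o x + Pc o x = Lc o y + Pc o y -> x = y.
Proof.
move=> hx hy hxy hs.
have := chain (pb_in x) (mem_pb x) hxy.
rewrite (gle_gadget o hx hy) (gle_gadget o hy hx) => h.
have [e1 e2] : Lc o x = Lc o y /\ Pc o x = Pc o y.
  by case/orP: h => /andP[]; lia.
by rewrite -(vxK o hx) -(vxK o hy) e1 e2.
Qed.


Local Notation G := (gadget E u).
Definition partsG := [set P in pi | P :&: G != set0].
Definition line o (i : 'I_m.+1) : {set T} := [set gvo o u i j | j : 'I_m.+1].

Lemma gvo_G o i j : gvo o u i j \in G.
Proof. by rewrite /gvo; case: o; rewrite inE /=. Qed.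

Lemma Lc_gvo o v i j : Lc o (gvo o v i j) = i.
Proof. by case: o. Qed.

Lemma line_mem o i z : (z \in line o i) = (z \in G) && (Lc o z == i).
Proof.
apply/imsetP/andP.
  by case=> j _ ->; rewrite gvo_G Lc_gvo.
case=> hz /eqP hL; exists (inord (Pc o z)) => //.
by rewrite -{1}(vxK o hz) /vx hL inord_val.
Qed.

Lemma vx_swap v L P : vx false v L P = vx true v P L.
Proof. by []. Qed.

Lemma count_family n (g : 'I_n -> T) : (forall k, g k \in G) ->
  (forall k k', g k' \in pb (g k) -> k = k') -> n <= #|partsG|.
Proof.
move=> gG ginj.
have fi : injective (fun k => pb (g k)).
  move=> k k' /= h; apply: ginj; rewrite h; exact: mem_pb.
rewrite -{1}(card_ord n) -(card_imset _ fi); apply: subset_leq_card.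
apply/subsetP=> P /imsetP[k _ ->]; rewrite inE pb_in /=.
by apply/set0Pn; exists (g k); rewrite inE mem_pb gG.
Qed.

Definition Row o i := forall y, y \in G -> (y \in pb (vx o u i 0)) = (Lc o y == i).

Lemma count_step o rr : rr <= m -> (forall i, i < rr -> Row o i) ->
  (forall i, rr <= i <= m -> vx o u i (m + rr - i) \notin pb (vx o u rr 0)) ->
  m.+2 <= #|partsG|.
Proof.
move=> hr IH hP.
pose g (k : 'I_m.+2) := if k < rr then vx o u k 0 else if k <= m then vx o u k (m + rr - k)
                         else vx o u rr 0.
have gG k : g k \in G by rewrite /g; case: ifP => _; [|case: ifP => _]; exact: vx_gadget.
have Lg (k : 'I_m.+2) : k <= m -> Lc o (g k) = k.
  move=> hk; rewrite /g; case: ifP => _; first by rewrite Lc_vx.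
  by rewrite hk Lc_vx.
have sym (k k' : 'I_m.+2) : g k' \in pb (g k) -> g k \in pb (g k').
  by move/pb_same=> ->; exact: mem_pb.
have key (k k' : 'I_m.+2) : k <= k' -> g k' \in pb (g k) -> k = k' :> nat.
  move=> hkk h; case: (ltnP k rr) => hk.
    have ek : g k = vx o u k 0 by rewrite /g hk.
    have := IH _ hk _ (gG k'); rewrite -ek h => /esym /eqP.
    case: (leqP k' m) => hk'; first by rewrite Lg.
    rewrite /g; have -> : (k' < rr) = false by apply/negbTE; rewrite -leqNgt; lia.
    rewrite leqNgt hk' /= Lc_vx // => e1; lia.
  case: (leqP k m) => hkm.
    case: (leqP k' m) => hk'm.
      have ek : g k = vx o u k (m + rr - k) by rewrite /g ltnNge hk hkm.
      have ek' : g k' = vx o u k' (m + rr - k') by rewrite /g ltnNge (leq_trans hk hkk) hk'm.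
      have e0 := antidiag (o:=o) (gG k) (gG k') h.
      move: e0; rewrite ek ek' !Lc_vx // !Pc_vx //; try lia.
      by move=> e1; have [] := vx_inj hkm _ hk'm _ (e1 _); lia.
    exfalso; move: h; rewrite /g ltnNge (leq_trans hk hkk) /= leqNgt hk'm /= ltnNge hk hkm /=.
    move=> h; have := hP k; rewrite hk hkm /= => /(_ isT).
    by rewrite (pb_same h) mem_pb.
  have := ltn_ord k'; lia.
have ginj (k k' : 'I_m.+2) : g k' \in pb (g k) -> k = k'.
  move=> h; apply: val_inj => /=; case: (leqP k k') => hkk; first exact: key.
  by apply/esym/key; [exact: ltnW|exact: sym].
exact: count_family gG ginj.
Qed.


Lemma gle_vx o v L P L' P' : L <= m -> P <= m -> L' <= m -> P' <= m ->
  gle (vx o v L P) (vx o v L' P') = (L <= L') && (P <= P').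
Proof.
move=> *; rewrite (gle_gadget o (vx_gadget o v L P) (vx_gadget o v L' P')).
by rewrite !Lc_vx // !Pc_vx.
Qed.

Lemma claim_start (Hm : 0 < m) : #|partsG| <= m.+1 ->
  exists o, vx o u 0 m \in pb (vx o u 0 0).
Proof.
move=> hc.
case: (boolP [exists d : 'I_m.+1, vx true u d (m - d) \in pb (vx true u 0 0)]); last first.
  move/existsPn=> hn; exfalso.
  have h : m.+2 <= #|partsG|.
    apply: (count_step (o:=true) (leq0n m)) => [i|i /andP[_ hi]]; first by rewrite ltn0.
    by have := hn (inord i); rewrite inordK // addn0.
  by move: hc; rewrite leqNgt h.
case/existsP=> d hin.
have hd := leq_ord d.
case: (posnP d) => [d0|dpos].
  by exists true; move: hin; rewrite d0 subn0.
case: (leqP m d) => [dm|dltm].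
  have dm' : (d : nat) = m by apply/eqP; rewrite eqn_leq dm hd.
  by exists false; rewrite !vx_swap; rewrite dm' subnn in hin.
exfalso.
have y1 : vx true u 0 1 \in pb (vx true u 0 0).
  apply: (conv_mem (vx_gadget _ _ _ _) (vx_gadget _ _ _ _) (vx_gadget _ _ _ _) _ _ hin).
    by rewrite gle_vx.
  rewrite gle_vx //; lia.
have y2 : vx true u 1 0 \in pb (vx true u 0 0).
  apply: (conv_mem (vx_gadget _ _ _ _) (vx_gadget _ _ _ _) (vx_gadget _ _ _ _) _ _ hin).
    by rewrite gle_vx.
  rewrite gle_vx //; lia.
have := incomp (x := vx true u 0 1) (y := vx true u 1 0).
by rewrite !gle_vx // (pb_same y1) y2 => /(_ isT isT).
Qed.


Lemma rows o (Hm : 0 < m) : #|partsG| <= m.+1 -> vx o u 0 m \in pb (vx o u 0 0) ->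
  forall rr, rr <= m -> Row o rr.
Proof.
move=> hc h0.
suff H : forall n rr, rr < n -> rr <= m -> Row o rr by move=> rr; apply: H (ltnSn rr).
elim=> [|n IH] rr //; rewrite ltnS => hrn hrm.
have IH' : forall i, i < rr -> Row o i.
  by move=> i hi; apply: IH; [exact: leq_trans hi hrn|exact: ltnW (leq_trans hi hrm)].
have g0 := vx_gadget o u.
have hm : vx o u rr m \in pb (vx o u rr 0).
  case: (posnP rr) => [r0|rpos]; first by rewrite r0.
  apply/negPn/negP => hn; exfalso.
  have h : m.+2 <= #|partsG|.
    apply: (count_step hrm IH') => i /andP[hi him].
    case: (eqVneq i rr) => [->|neq]; first by rewrite addnK.
    apply/negP=> hin.
    have y1 : vx o u rr 1 \in pb (vx o u rr 0).
      apply: (conv_mem (g0 _ _) (g0 _ _) (g0 _ _) _ _ hin); rewrite gle_vx //; lia.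
    have y2 : vx o u rr.+1 0 \in pb (vx o u rr 0).
      apply: (conv_mem (g0 _ _) (g0 _ _) (g0 _ _) _ _ hin); rewrite gle_vx //; lia.
    have := incomp (x := vx o u rr 1) (y := vx o u rr.+1 0).
    rewrite !gle_vx ?(pb_same y1) ?y2; try lia.
  by move: hc; rewrite leqNgt h.
move=> y hy.
have ey : y = vx o u (Lc o y) (Pc o y) by rewrite vxK.
have hL := Lc_le o y; have hQ := Pc_le o y.
have GL : forall L P, L <= m -> P <= m -> gle (vx o u L P) y = (L <= Lc o y) && (P <= Pc o y).
  by move=> L P h1 h2; rewrite (gle_gadget o (g0 _ _) hy) Lc_vx // Pc_vx.
have GR : forall L P, L <= m -> P <= m -> gle y (vx o u L P) = (Lc o y <= L) && (Pc o y <= P).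
  by move=> L P h1 h2; rewrite (gle_gadget o hy (g0 _ _)) Lc_vx // Pc_vx.
apply/idP/eqP.
- move=> yP; have := chain (pb_in _) hm yP; rewrite GL // GR //.
  case/orP=> /andP[h1 h2].
  + case: (ltnP rr (Lc o y)) => h3; last by apply/eqP; rewrite eqn_leq h3 h1.
    exfalso.
    have y2 : vx o u rr.+1 0 \in pb (vx o u rr 0).
      apply: (conv_mem (g0 _ _) (g0 _ _) hy _ _ yP); rewrite ?gle_vx ?GL //; lia.
    have := incomp (x := vx o u rr m) (y := vx o u rr.+1 0).
    rewrite !gle_vx ?(pb_same hm) ?y2; try lia.
  + case: (ltnP (Lc o y) rr) => h3; last by apply/eqP; rewrite eqn_leq h1 h3.
    exfalso.
    have := IH' _ h3 _ hy; rewrite eqxx => /pb_same e1.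
    have := IH' _ h3 _ (g0 rr 0); rewrite Lc_vx // -e1 (pb_same yP) mem_pb.
    move/esym/eqP; lia.
- move=> eL; apply: (conv_mem (g0 _ _) hy (g0 _ _) _ _ hm); rewrite ?GL ?GR //; lia.
Qed.

Lemma claim (Hm : 0 < m) : #|partsG| <= m.+1 -> well_oriented pi u.
Proof.
move=> hc; have [o h0] := claim_start Hm hc.
have R := rows Hm hc h0.
have key y z : y \in G -> z \in G -> (z \in pb y) = (Lc o z == Lc o y).
  move=> hy hz; have := R _ (Lc_le o y) _ hy; rewrite eqxx => /pb_same ->.
  exact: R (Lc_le o y) _ hz.
have eq : restr pi G = [set line o i | i : 'I_m.+1].
  rewrite (restr_pblock _ Hpart); apply/setP=> S; apply/imsetP/imsetP.
  - case=> y hy ->; exists (inord (Lc o y)) => //.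
    apply/setP=> z; rewrite inE line_mem inordK ?ltnS ?Lc_le //.
    by case: (boolP (z \in G)) => hz; rewrite ?andbF ?andbT // key.
  - case=> i _ ->; exists (vx o u i 0); first exact: vx_gadget.
    apply/setP=> z; rewrite inE line_mem.
    case: (boolP (z \in G)) => hz; rewrite ?andbF ?andbT // key ?vx_gadget //.
    by rewrite Lc_vx // -ltnS.
rewrite /well_oriented eq; case: o {h0 R key eq}; [apply/orP; left|apply/orP; right].
  by [].
by [].
Qed.


Variable o : bool.

Lemma e_le a : e a <= m. Proof. by case/andP: (He_range a). Qed.
Lemma e_pos a : 0 < e a. Proof. by case/andP: (He_range a). Qed.

Definition attached (a : edgeT E) := good o a && (inr a \in pb (vx o u (e a) 0)).
Definition isbad (x : T) := if x is inr a then bad o a else false.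
Definition isatt (x : T) := if x is inr a then attached a else false.
Definition ea (x : T) := if x is inr a then e a else 0.
Definition Zset := [set x | [|| x \in G, isbad x | isatt x]].
Definition lineX (L : nat) : {set T} :=
  [set x | ((x \in G) && (Lc o x == L)) || (isatt x && (ea x == L))].
Definition blk (x : T) : {set T} :=
  if x \in G then lineX (Lc o x) else if isbad x then [set x]
  else if isatt x then lineX (ea x) else pb x :\: Zset.

Lemma G_isl x : x \in G -> isl x.
Proof. by case: x => [p|a] //; rewrite inE. Qed.
Lemma G_nbad x : x \in G -> isbad x = false.
Proof. by case: x => [p|a] //; rewrite inE. Qed.
Lemma G_natt x : x \in G -> isatt x = false.
Proof. by case: x => [p|a] //; rewrite inE. Qed.
Lemma att_nbad x : isatt x -> isbad x = false.
Proof.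
case: x => // a /andP[hg _] /=; apply/negP=> hb; exact: good_bad hg hb.
Qed.
Lemma att_nG x : isatt x -> x \notin G.
Proof. by case: x => [p|a] //; rewrite inE. Qed.
Lemma bad_nG x : isbad x -> x \notin G.
Proof. by case: x => [p|a] //; rewrite inE. Qed.

Lemma inZ x : (x \in Zset) = [|| x \in G, isbad x | isatt x].
Proof. by rewrite inE. Qed.

Lemma lineX_mem L x :
  (x \in lineX L) = ((x \in G) && (Lc o x == L)) || (isatt x && (ea x == L)).
Proof. exact: in_set. Qed.

Lemma blk_lineX L y : y \in lineX L -> blk y = lineX L.
Proof.
rewrite inE /blk => /orP[/andP[-> /eqP->] //|/andP[ha /eqP<-]].
by rewrite (negbTE (att_nG ha)) (att_nbad ha) ha.
Qed.

Lemma blk_notZ y : y \notin Zset -> blk y = pb y :\: Zset.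
Proof.
by rewrite inZ /blk; case: (y \in G) => //=; case: (isbad y) => //=; case: (isatt y).
Qed.

Lemma mem_blk x : x \in blk x.
Proof.
rewrite /blk; case: ifP => hG; first by rewrite inE hG eqxx.
case: ifP => hb; first by rewrite inE.
case: ifP => ha; first by rewrite inE ha eqxx orbT.
by rewrite inE mem_pb inZ hG hb ha.
Qed.

Lemma blk_same x y : y \in blk x -> blk y = blk x.
Proof.
case: (boolP (x \in G)) => hG.
  have -> : blk x = lineX (Lc o x) by rewrite /blk hG.
  exact: blk_lineX.
case: (boolP (isbad x)) => hb.
  have -> : blk x = [set x] by rewrite /blk (negbTE hG) hb.
  by rewrite inE => /eqP->; rewrite /blk (negbTE hG) hb.
case: (boolP (isatt x)) => ha.
  have -> : blk x = lineX (ea x) by rewrite /blk (negbTE hG) (negbTE hb) ha.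
  exact: blk_lineX.
have xZ : x \notin Zset by rewrite inZ (negbTE hG) (negbTE hb) (negbTE ha).
rewrite (blk_notZ xZ) inE => /andP[yZ yP].
by rewrite (blk_notZ yZ) (pb_same yP).
Qed.

Lemma SL P g y : P \in pi -> g \in P -> g \in G -> y \in P -> y \in Zset.
Proof.
move=> hP hg gG hy; rewrite inZ.
case: y hy => [p|a] hy.
  by rewrite (gle_same_gadget gG _ (chain hP hg hy)).
have gn : g != inr a by apply/eqP => eg; move: gG; rewrite eg inE.
have [z zP hz] := arc_step hP hy hg gn.
have zl : isl z by case: z hz zP => // b; rewrite parc_inr_inr.
have zG : z \in G := gle_same_gadget gG zl (chain hP hg zP).
move: hz; rewrite (parc_arc_G o _ zG) => /orP[/andP[/andP[hgood /eqP hL] /eqP hQ]|/andP[/andP[hb _] _]];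
  last by rewrite /= hb orbT.
apply/orP; right; apply/orP; right; rewrite /= /attached hgood /=.
have -> : vx o u (e a) 0 = z by rewrite -hL -hQ vxK.
by rewrite (pb_eq hP zP).
Qed.


Lemma rows_path L k n : L <= m -> k + n <= m ->
  path r (vx o u L k) [seq vx o u L j | j <- iota k.+1 n].
Proof.
move=> hL; elim: n k => [|n IH] k hk //=.
rewrite r_vx_P //; last by lia.
by apply: IH; lia.
Qed.

Lemma mem_rows L x : L <= m ->
  (x \in [seq vx o u L j | j <- iota 0 m.+1]) = (x \in G) && (Lc o x == L).
Proof.
move=> hL; apply/mapP/andP.
  by case=> j; rewrite mem_iota => /andP[_ hj] ->; rewrite vx_gadget Lc_vx.
case=> hx /eqP hl; exists (Pc o x); first by rewrite mem_iota /= add0n ltnS Pc_le.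
by rewrite -hl vxK.
Qed.

Lemma ham_line L : L <= m -> ham_path r (lineX L).
Proof.
move=> hL.
pose A := enum [pred a | attached a && (e a == L)].
exists ([seq inr a | a <- A] ++ [seq vx o u L j | j <- iota 0 m.+1]); split.
- rewrite cat_uniq; apply/and3P; split.
  + rewrite map_inj_uniq ?enum_uniq //; by move=> a b [].
  + apply/hasPn=> x; rewrite mem_rows // => /andP[hx _].
    by apply/mapP=> -[a _ ex]; move: hx; rewrite ex inE.
  + rewrite map_inj_in_uniq ?iota_uniq // => j k; rewrite !mem_iota /= !add0n !ltnS => hj hk.
    by move/(vx_inj hL hj hL hk) => [].
- move=> x; rewrite mem_cat mem_rows // lineX_mem orbC; congr (_ || _).
  case: x => [p|a].
    by rewrite /=; apply/mapP=> -[b _].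
  rewrite mem_map; last by move=> b c [].
  by rewrite /A mem_enum inE.
- rewrite /sorted.
  have hrow : path r (vx o u L 0) [seq vx o u L j | j <- iota 1 m] by apply: rows_path; lia.
  case hA: A => [|a [|b A']] /=.
  + exact: hrow.
  + rewrite hrow andbT.
    have : a \in A by rewrite hA inE eqxx.
    rewrite /A mem_enum inE => /andP[/andP[hg _] /eqP ha].
    change (r (inr a) (vx o u L 0)).
    by rewrite (parc_arc_G o _ (vx_gadget _ _ _ _)) Lc_vx // Pc_vx // hg ha !eqxx.
  + exfalso.
    have u1 : uniq A by rewrite enum_uniq.
    have ha : a \in A by rewrite hA inE eqxx.
    have hb : b \in A by rewrite hA !inE eqxx orbT.
    rewrite hA /= inE in u1.
    move: ha hb; rewrite /A !mem_enum !inE => /andP[_ /eqP ea'] /andP[_ /eqP eb].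
    have eab : a = b by apply: He_inj; rewrite ea' eb.
    by move: u1; rewrite eab eqxx.
Qed.

Lemma ham_single x : ham_path r [set x].
Proof. by exists [:: x]; split => // y; rewrite !inE. Qed.

Lemma ham_other x : x \notin Zset -> ham_path r (pb x :\: Zset).
Proof.
move=> xZ.
have noG : forall y, y \in pb x -> y \notin G.
  move=> y hy; apply/negP => yG; move: xZ; by rewrite (SL (pb_in x) hy yG (mem_pb x)).
have [s [us ms ss]] := Hham (pb_in x).
case: s us ms ss => [|x0 s] us ms ss; first by have := mem_pb x; rewrite -ms.
have al := path_isl ss.
have sZ : forall y, y \in s -> y \notin Zset.
  move=> y ys; have yl : isl y by move/allP: al => /(_ y ys).
  have yP : y \in pb x by rewrite -ms inE ys orbT.
  rewrite inZ (negbTE (noG _ yP)) /=; by case: y yl {ys yP}.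
case: (boolP (x0 \in Zset)) => x0Z.
  exists s; split.
  - by case/andP: us.
  - move=> y; rewrite in_setD -ms in_cons; apply/idP/idP.
      by move=> ys; rewrite sZ // ys orbT.
    case/andP=> yZ /orP[/eqP ey|//]; by move: yZ; rewrite ey x0Z.
  - exact: path_sorted ss.
exists (x0 :: s); split => //.
move=> y; rewrite in_setD -ms; apply/idP/idP; last by case/andP.
move=> ys; rewrite ys andbT; move: ys; rewrite in_cons => /orP[/eqP->//|]; exact: sZ.
Qed.

Lemma ham_blk x : ham_path r (blk x).
Proof.
rewrite /blk; case: ifP => hG; first by apply: ham_line; exact: Lc_le.
case: ifP => hb; first exact: ham_single.
case: ifP => ha; first by apply: ham_line; case: x {hG hb} ha => //= a _; exact: e_le.
by apply: ham_other; rewrite inZ hG hb ha.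
Qed.


Lemma ar1 a b c d : a < b -> c <= m.+1 -> 1 <= d -> a * m.+2 + c < b * m.+2 + d.
Proof. move=> h1 h2 h3; nia. Qed.
Lemma ar2 a b c d : a <= b -> c < d -> a * m.+2 + c < b * m.+2 + d.
Proof. move=> h1 h2; nia. Qed.

Definition hh P := h0 r pi P.
Definition RL L := hh (pb (vx o u L 0)) * m.+2 + L.+1.
Definition rk x := if x \in G then RL (Lc o x) else if isbad x then 0
  else if isatt x then RL (ea x) else hh (pb x) * m.+2 + 1.

Lemma rk_lineX L y : y \in lineX L -> rk y = RL L.
Proof.
rewrite lineX_mem /rk => /orP[/andP[-> /eqP->] //|/andP[ha /eqP<-]].
by rewrite (negbTE (att_nG ha)) (att_nbad ha) ha.
Qed.

Lemma rk_notZ y : y \notin Zset -> rk y = hh (pb y) * m.+2 + 1.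
Proof.
by rewrite inZ /rk; case: (y \in G) => //=; case: (isbad y) => //=; case: (isatt y).
Qed.

Lemma rk_blk x y : y \in blk x -> rk y = rk x.
Proof.
case: (boolP (x \in G)) => hG.
  have -> : blk x = lineX (Lc o x) by rewrite /blk hG.
  by move/rk_lineX->; rewrite /rk hG.
case: (boolP (isbad x)) => hb.
  have -> : blk x = [set x] by rewrite /blk (negbTE hG) hb.
  by rewrite inE => /eqP->.
case: (boolP (isatt x)) => ha.
  have -> : blk x = lineX (ea x) by rewrite /blk (negbTE hG) (negbTE hb) ha.
  by move/rk_lineX->; rewrite /rk (negbTE hG) (negbTE hb) ha.
have xZ : x \notin Zset by rewrite inZ (negbTE hG) (negbTE hb) (negbTE ha).
rewrite (blk_notZ xZ) inE => /andP[yZ yP].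
by rewrite (rk_notZ yZ) (rk_notZ xZ) (pb_same yP).
Qed.

Lemma qarc_pb x y : r x y -> pb x != pb y -> qarc r pi (pb x) (pb y).
Proof.
move=> hxy neq; rewrite /qarc !pb_in neq /=.
by apply/existsP; exists x; rewrite mem_pb; apply/existsP; exists y; rewrite mem_pb.
Qed.

Lemma hh_step x y : r x y -> hh (pb x) <= hh (pb y).
Proof.
move=> hxy; case: (eqVneq (pb x) (pb y)) => [->//|neq].
exact: ltnW (h0_lt Hacyc (qarc_pb hxy neq)).
Qed.

Lemma hh_lt x y : r x y -> pb x != pb y -> hh (pb x) < hh (pb y).
Proof. move=> hxy neq; exact: (h0_lt Hacyc (qarc_pb hxy neq)). Qed.

Lemma gadget_uniq v w x : x \in gadget E v -> x \in gadget E w -> v = w.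
Proof. by case: x => [[[z i] j]|a]; rewrite !inE // => /eqP-> /eqP->. Qed.

Lemma inl_nZ y : isl y -> y \notin G -> y \notin Zset.
Proof. by rewrite inZ => yl /negbTE->; case: y yl. Qed.

Lemma rk_lt x y : r x y -> blk x != blk y -> rk x < rk y.
Proof.
move=> hxy nb.
have yl : isl y by case: y hxy {nb} => // b; rewrite parc_to_inr.
case: (boolP (x \in G)) => hG.
  have yG := parc_gadget_in hG hxy.
  have hbx : blk x = lineX (Lc o x) by rewrite /blk hG.
  have hby : blk y = lineX (Lc o y) by rewrite /blk yG.
  have := hxy; rewrite (parc_gadget o _ hG) yG /= => /orP[/andP[/eqP e1 _]|/andP[/eqP e1 /eqP e2]].
    by move: nb; rewrite hbx hby e1 eqxx.
  rewrite /rk hG yG /RL e1.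
  apply: ar2 => //; apply: hh_step; apply: r_vx_L => //.
  by rewrite -ltnS -e1 ltnS Lc_le.
case: (boolP (isbad x)) => hb.
  rewrite /rk (negbTE hG) hb; case: ifP => yG; first by rewrite /RL addnS.
  by case: y yl {hxy nb yG} => //= p _; rewrite addn1.
case: (boolP (isatt x)) => ha.
  case: x hxy nb hG hb ha => [p|a] // hxy nb hG hb ha.
  case: (boolP (y \in G)) => yG.
    move: hxy; rewrite (parc_arc_G o _ yG) => /orP[/andP[/andP[_ /eqP e1] _]|/andP[/andP[hb' _] _]];
      last by move: hb; rewrite /= hb'.
    exfalso; move: nb; rewrite /blk yG (negbTE hG) (negbTE hb) ha /= e1 eqxx //.
  have yZ := inl_nZ yl yG.
  rewrite (rk_notZ yZ) /rk (negbTE hG) (negbTE hb) ha /RL /=.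
  have hx : inr a \in pb (vx o u (e a) 0) by case/andP: ha.
  rewrite -(pb_same hx); apply: ar1; last by [].
    apply: hh_lt => //; apply/eqP => epb.
    have yP : y \in pb (inr a) by rewrite epb mem_pb.
    rewrite (pb_same hx) in yP.
    by move: yZ; rewrite (SL (pb_in _) (mem_pb _) (vx_gadget _ _ _ _) yP).
  by rewrite ltnS; apply: leq_trans (e_le a) _.
have xZ : x \notin Zset by rewrite inZ (negbTE hG) (negbTE hb) (negbTE ha).
rewrite (rk_notZ xZ).
case: (boolP (y \in G)) => yG; last first.
  have yZ := inl_nZ yl yG.
  rewrite (rk_notZ yZ); apply: ar1 => //; apply: hh_lt => //.
  by apply: contraNneq nb; rewrite (blk_notZ xZ) (blk_notZ yZ) => ->.
case: x hxy nb hG hb ha xZ => [p|a] hxy nb hG hb ha xZ.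
  exfalso; have := parc_gadget_in (v := p.1.1) _ hxy.
  case: p {hxy nb hb ha xZ} hG => [[w i] j] hG /=.
  rewrite inE eqxx => /(_ isT) yw; move: hG; rewrite inE /=.
  by rewrite (gadget_uniq yw yG) eqxx.
move: (hxy); rewrite (parc_arc_G o _ yG) => /orP[/andP[/andP[hg /eqP e1] /eqP e2]|/andP[/andP[hb' _] _]];
  last by move: hb; rewrite /= hb'.
have ey : vx o u (e a) 0 = y by rewrite -e1 -e2 vxK.
rewrite /rk yG /RL e1 ey; apply: ar1 => //.
  apply: hh_lt => //; apply/negP => /eqP epb.
  move: ha; rewrite /= /attached hg ey /= -epb mem_pb //.
Qed.


Definition Pi' := [set blk x | x : T].

Lemma Pi'_part : partition Pi' [set: T].
Proof. exact: blk_partition mem_blk blk_same. Qed.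

Lemma Pi'_mem B x : B \in Pi' -> x \in B -> B = blk x.
Proof. exact: blk_mem blk_same. Qed.

Lemma pblock_Pi' y : pblock Pi' y = blk y.
Proof.
apply: def_pblock (partition_trivIset Pi'_part) _ (mem_blk y).
by apply/imsetP; exists y.
Qed.

Definition rkB (B : {set T}) := if [pick z in B] is Some z then rk z else 0.

Lemma rkB_blk x : rkB (blk x) = rk x.
Proof.
rewrite /rkB; case: pickP => [z hz|none]; first exact: rk_blk.
by have := none x; rewrite mem_blk.
Qed.

Lemma Pi'_star : Hstar_partition r Pi'.
Proof.
split; first exact: Pi'_part.
  by move=> B /imsetP[x _ ->]; exact: ham_blk.
apply: (no_cycle_rank (rk := rkB)) => P Q /and4P[hP hQ nPQ /existsP[x /andP[xP /existsP[y /andP[yQ hxy]]]]].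
rewrite (Pi'_mem hP xP) (Pi'_mem hQ yQ) !rkB_blk; apply: rk_lt => //.
by rewrite -(Pi'_mem hP xP) -(Pi'_mem hQ yQ).
Qed.

Lemma Pi'_wo : well_oriented Pi' u.
Proof.
have eq : restr Pi' G = [set line o i | i : 'I_m.+1].
  rewrite (restr_pblock _ Pi'_part); apply/setP=> S; apply/imsetP/imsetP.
  - case=> y hy ->; exists (inord (Lc o y)) => //.
    apply/setP=> z; rewrite pblock_Pi' inE line_mem inordK ?ltnS ?Lc_le //.
    rewrite /blk hy lineX_mem; case: (boolP (z \in G)) => hz; rewrite ?andbF ?andbT //.
    by rewrite (G_natt hz) orbF.
  - case=> i _ ->; exists (vx o u i 0); first exact: vx_gadget.
    apply/setP=> z; rewrite pblock_Pi' inE line_mem /blk vx_gadget lineX_mem Lc_vx; last by rewrite -ltnS.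
    case: (boolP (z \in G)) => hz; rewrite ?andbF ?andbT //.
    by rewrite (G_natt hz) orbF.
rewrite /well_oriented eq; case: o {eq}; [apply/orP; left|apply/orP; right].
  by [].
by [].
Qed.

Lemma Pi'_other w : w != u -> restr Pi' (gadget E w) = restr pi (gadget E w).
Proof.
move=> nwu; rewrite (restr_pblock _ Pi'_part) (restr_pblock _ Hpart).
apply: eq_in_imset => y hy; rewrite pblock_Pi'.
have yG : y \notin G by apply/negP => yG; move: nwu; rewrite (gadget_uniq hy yG) eqxx.
have yl : isl y by case: y hy {yG}=> // a; rewrite inE.
rewrite (blk_notZ (inl_nZ yl yG)); apply/setP => z; rewrite !in_setI in_setD.
case: (boolP (z \in gadget E w)) => hz; rewrite ?andbF ?andbT //.
have zG : z \notin G by apply/negP => zG; move: nwu; rewrite (gadget_uniq hz zG) eqxx.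
have zl : isl z by case: z hz {zG}=> // a; rewrite inE.
by rewrite (inl_nZ zl zG).
Qed.

Lemma cardU_le (A B : {set {set T}}) : #|A :|: B| <= #|A| + #|B|.
Proof. by rewrite -cardsUI leq_addr. Qed.

Lemma Pi'_card : #|[set b | bad o b]| <= 1 -> m.+2 <= #|partsG| -> #|Pi'| <= #|pi|.
Proof.
move=> hbad hG.
pose S := [set P : {set T} | P \subset Zset].
pose A := [set P :\: Zset | P in pi :\: S].
pose Bs := [set lineX i | i : 'I_m.+1].
pose Cs := [set [set (inr b : T)] | b in [set b | bad o b]].
have sub : Pi' \subset A :|: Bs :|: Cs.
  apply/subsetP=> B /imsetP[x _ ->]; rewrite /blk.
  case: ifP => hx.
    rewrite !inE; apply/orP; left; apply/orP; right; apply/imsetP.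
    by exists (inord (Lc o x)) => //; rewrite inordK // ltnS Lc_le.
  case: ifP => hb.
    case: x hx hb => [p|b] // hx hb.
    rewrite !inE; apply/orP; right; apply/imsetP; exists b => //; by rewrite inE.
  case: ifP => ha.
    case: x hx hb ha => [p|b] // hx hb ha.
    rewrite !inE; apply/orP; left; apply/orP; right; apply/imsetP.
    by exists (inord (e b)) => //=; rewrite inordK // ltnS e_le.
  have xZ : x \notin Zset by rewrite inZ hx hb ha.
  rewrite !inE; apply/orP; left; apply/orP; left; apply/imsetP; exists (pb x) => //.
  rewrite !inE pb_in andbT; apply/negP=> /subsetP/(_ x (mem_pb x)); exact/negP.
have cA : #|A| <= #|pi :\: S| by apply: leq_imset_card.
have cB : #|Bs| <= m.+1.
  by apply: leq_trans (leq_imset_card _ _) _; rewrite card_ord.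
have cC : #|Cs| <= 1 by apply: leq_trans (leq_imset_card _ _) hbad.
have cG : #|partsG| <= #|pi :&: S|.
  apply: subset_leq_card; apply/subsetP=> P; rewrite !inE => /andP[hP /set0Pn[g]].
  rewrite inE => /andP[gP gG]; rewrite hP /=; apply/subsetP=> y yP.
  exact: SL hP gP gG yP.
rewrite -(cardsID S pi).
apply: leq_trans (subset_leq_card sub) _.
apply: leq_trans (cardU_le _ _) _; apply: leq_trans (leq_add (cardU_le _ _) (leqnn _)) _.
apply: leq_trans (leq_add (leq_add cA cB) cC) _.
have h2 := leq_trans hG cG.
rewrite [X in _ <= X]addnC -addnA leq_add2l addn1; exact: h2.
Qed.


Lemma construction (Hm : 0 < m) (Hu : ~~ well_oriented pi u)
  (Hbad : #|[set b | bad o b]| <= 1) :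
  exists pi' : {set {set T}},
    [/\ Hstar_partition r pi', #|pi'| <= #|pi|, well_oriented pi' u
      & forall w, w != u -> (well_oriented pi w <-> well_oriented pi' w)].
Proof.
exists Pi'; split.
- exact: Pi'_star.
- have := Pi'_card Hbad; apply; rewrite ltnNge; apply/negP => hc.
  by move: Hu; rewrite (claim Hm hc).
- exact: Pi'_wo.
- by move=> w hw; rewrite /well_oriented Pi'_other.
Qed.

End Main.

Theorem lemma5p8 (V : finType) (E : rel V) (e : edgeT E -> nat)
  (HV : 0 < #|V|)
  (Hloop : forall v, ~~ E v v)
  (Hdeg : forall v, #|[set w | E w v]| = 1 \/ #|[set w | E v w]| = 1)
  (He_inj : injective e)
  (He_range : forall a, 1 <= e a <= nedges E)
  (He_surj : forall k, 1 <= k <= nedges E -> exists a, e a = k)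
  (u : V) (pi : {set {set PV E}})
  (Hpi : Hstar_partition (parc e) pi)
  (Hu : ~~ well_oriented pi u) :
  exists pi' : {set {set PV E}},
    [/\ Hstar_partition (parc e) pi',
        #|pi'| <= #|pi|,
        well_oriented pi' u
      & forall w, w != u -> (well_oriented pi w <-> well_oriented pi' w)].
Proof.
have Hm : 0 < nedges E.
  have [w hw] : exists w, E w u || E u w.
    case: (Hdeg u) => h.
      have : 0 < #|[set w | E w u]| by rewrite h.
      by case/card_gt0P=> w; rewrite inE => hw; exists w; rewrite hw.
    have : 0 < #|[set w | E u w]| by rewrite h.
    by case/card_gt0P=> w; rewrite inE => hw; exists w; rewrite hw orbT.
  case/orP: hw => hw.
    by apply/card_gt0P; exists (exist (fun p : V * V => E p.1 p.2) (w, u) hw).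
  by apply/card_gt0P; exists (exist (fun p : V * V => E p.1 p.2) (u, w) hw).
pose o := #|[set w | E w u]| == 1.
have Hbad : #|[set b : edgeT E | bad u o b]| <= 1.
  rewrite /bad /good /o; case: (boolP (_ == 1)) => /= h.
    have inj : {in [set b : edgeT E | (val b).2 == u] &, injective (fun b : edgeT E => (val b).1)}.
      move=> b c; rewrite !inE => /eqP hb /eqP hc h1; apply: val_inj.
      by rewrite [val b]surjective_pairing [val c]surjective_pairing h1 hb hc.
    rewrite -(card_in_imset inj) -(eqP h); apply: subset_leq_card.
    apply/subsetP=> w /imsetP[b]; rewrite inE => /eqP hb ->; rewrite inE.
    by have := valP b; rewrite hb.
  have h' : #|[set w | E u w]| = 1 by case: (Hdeg u) => // h1; rewrite h1 eqxx in h.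
  have inj : {in [set b : edgeT E | (val b).1 == u] &, injective (fun b : edgeT E => (val b).2)}.
    move=> b c; rewrite !inE => /eqP hb /eqP hc h1; apply: val_inj.
    by rewrite [val b]surjective_pairing [val c]surjective_pairing h1 hb hc.
  rewrite -(card_in_imset inj) -h'; apply: subset_leq_card.
  apply/subsetP=> w /imsetP[b]; rewrite inE => /eqP hb ->; rewrite inE.
  by have := valP b; rewrite hb.
have := construction Hloop He_inj He_range Hpi Hm Hu Hbad.
by [].
Qed.
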